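(* Let $m$ be an even positive integer, $q=2^m$, and let $\{u_1,u_2,u_3\}$ be a $3$-element subset of $U_{q+1}$. Let $M_3$ be the $4\times3$ matrix whose $j$-th column is $(u_j^{-5},u_j^{-3},u_j^{3},u_j^{5})^T$. Then $\mathrm{rank}(M_3)=3$.
   Context: $U_{q+1}$ denotes the set of $(q+1)$-th roots of unity in $\mathrm{GF}(q^2)$; ranks are over $\mathrm{GF}(q^2)$. *)

(* Defs.v *)
From HB Require Import structures.
From mathcomp Require Import all_boot all_order all_algebra all_field.
Set Implicit Arguments. Unset Strict Implicit. Unset Printing Implicit Defensive.
Import GRing.Theory.
Local Open Scope ring_scope.

Definition M3 (F : fieldType) (u : 'I_3 -> F) : 'M[F]_(4, 3) :=
  \matrix_(i < 4, j < 3)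
    nth 0 [:: (u j) ^- 5; (u j) ^- 3; (u j) ^+ 3; (u j) ^+ 5] i.

Definition in_U (F : fieldType) (q : nat) (x : F) : bool := x ^+ q.+1 == 1.

(* Main.v *)
Require Import Defs.
From HB Require Import structures.
From mathcomp Require Import all_boot all_order all_algebra all_field.
From mathcomp Require Import ring.
Set Implicit Arguments. Unset Strict Implicit. Unset Printing Implicit Defensive.
Import GRing.Theory.
Local Open Scope ring_scope.

Definition natA (R : comRingType) (A : 'M[R]_3) (i j : nat) := A (inord i) (inord j).

Lemma det3 (R : comRingType) (A : 'M[R]_3) : \det A =
  A 0 0 * (A 1 1 * A 2 2 - A 1 2 * A 2 1) - A 0 1 * (A 1 0 * A 2 2 - A 1 2 * A 2 0)
  + A 0 2 * (A 1 0 * A 2 1 - A 1 1 * A 2 0).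
Proof.
rewrite (expand_det_row _ ord0) !big_ord_recr big_ord0 /= /cofactor.
rewrite !(expand_det_row _ ord0) !big_ord_recr !big_ord0 /= /cofactor.
rewrite !det_mx11 !mxE /=.
have HA : forall i j, A i j = natA A i j by move=> i j; rewrite /natA !inord_val.
rewrite !HA /= /bump /=.
have -> : (1 %% 3 = 1)%N by [].
have -> : ((1 + 1) %% 3 = 2)%N by [].
rewrite ?add0n ?addn0 !expr0 !expr1 /=.
have -> : ((1 + 1) = 2)%N by [].
rewrite /natA. ring.
Qed.

Lemma sq_inj (F : fieldType) (a b : F) : 2%:R = 0 :> F -> a ^+ 2 = b ^+ 2 -> a = b.
Proof.
move=> h2 e; apply/eqP; rewrite -subr_eq0 -[_ == 0](andTb) -(expf_eq0 _ 2).
have -> : (a - b) ^+ 2 = (a ^+ 2 - b ^+ 2) + 2%:R * (b ^+ 2 - a * b) by ring.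
by rewrite e subrr h2 mul0r addr0.
Qed.

Lemma key (F : fieldType) (x0 x1 x2 : F) : 2%:R = 0 :> F ->
  x0 ^+ 2 + x1 ^+ 2 + x2 ^+ 2 + x0 * x1 + x0 * x2 + x1 * x2 = 0 ->
  x0 ^+ 3 + x1 ^+ 3 + x2 ^+ 3 + x0 ^+ 2 * x1 + x0 ^+ 2 * x2 + x1 ^+ 2 * x0
   + x1 ^+ 2 * x2 + x2 ^+ 2 * x0 + x2 ^+ 2 * x1 + x0 * x1 * x2 = 0 -> x1 = x2.
Proof.
move=> h2 H2 H3.
have e : (x1 + x2) ^+ 3 = x0 * (x0 ^+ 2 + x1 ^+ 2 + x2 ^+ 2 + x0 * x1 + x0 * x2 + x1 * x2)
  + (x0 ^+ 3 + x1 ^+ 3 + x2 ^+ 3 + x0 ^+ 2 * x1 + x0 ^+ 2 * x2 + x1 ^+ 2 * x0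
   + x1 ^+ 2 * x2 + x2 ^+ 2 * x0 + x2 ^+ 2 * x1 + x0 * x1 * x2)
  + 2%:R * (x1^+2*x2 + x1*x2^+2 - x0^+3 - x0*x1^+2 - x0*x2^+2 - x0^+2*x1 - x0^+2*x2 - x0*x1*x2)
  by ring.
rewrite H2 H3 h2 mulr0 !mul0r !addr0 in e.
move/eqP: e; rewrite expf_eq0 /= => /eqP e.
apply/eqP; rewrite -subr_eq0.
have -> : x1 - x2 = (x1 + x2) - 2%:R * x2 by ring.
by rewrite e h2 mul0r subr0.
Qed.

Definition f1 (i : 'I_3) : 'I_4 := inord (nth 0%N [:: 0; 1; 2]%N i).
Definition f2 (i : 'I_3) : 'I_4 := inord (nth 0%N [:: 0; 1; 3]%N i).

Lemma det1E (F : fieldType) (u : 'I_3 -> F) (a := u 0) (b := u 1) (c := u 2) :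
  a != 0 -> b != 0 -> c != 0 ->
  \det (rowsub f1 (M3 u)) * (a * b * c) ^+ 5 =
  (b^+2 - a^+2) * (c^+2 - a^+2) * (c^+2 - b^+2) *
  ((a^+2)^+2 + (b^+2)^+2 + (c^+2)^+2 + a^+2 * b^+2 + a^+2 * c^+2 + b^+2 * c^+2).
Proof.
move=> ha hb hc.
rewrite det3 !mxE /f1 /= !inordK //= -/a -/b -/c.
field.
by rewrite ha hb hc.
Qed.

Lemma det2E (F : fieldType) (u : 'I_3 -> F) (a := u 0) (b := u 1) (c := u 2) :
  a != 0 -> b != 0 -> c != 0 ->
  \det (rowsub f2 (M3 u)) * (a * b * c) ^+ 5 =
  (b^+2 - a^+2) * (c^+2 - a^+2) * (c^+2 - b^+2) *
  ((a^+2) ^+ 3 + (b^+2) ^+ 3 + (c^+2) ^+ 3 + (a^+2) ^+ 2 * b^+2 + (a^+2) ^+ 2 * c^+2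
   + (b^+2) ^+ 2 * a^+2 + (b^+2) ^+ 2 * c^+2 + (c^+2) ^+ 2 * a^+2 + (c^+2) ^+ 2 * b^+2
   + a^+2 * b^+2 * c^+2).
Proof.
move=> ha hb hc.
rewrite det3 !mxE /f2 /= !inordK //= -/a -/b -/c.
field.
by rewrite ha hb hc.
Qed.

Theorem lemma16 (F : finFieldType) (m : nat) (hm : (0 < m)%N) (hev : ~~ odd m)
  (hF : #|F| = ((2 ^ m) ^ 2)%N)
  (u : 'I_3 -> F) (hinj : injective u) (hU : forall j, in_U (2 ^ m) (u j)) :
  \rank (M3 u) = 3%N.
Proof.
have h2 : 2%:R = 0 :> F.
  apply: (pcharf0 (p := 2%N)); apply: (@card_finPcharP _ 2%N (m * 2)) => //.
  by rewrite hF expnM.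
have nz : forall j, u j != 0.
  move=> j; apply/negP => /eqP e; move: (hU j); rewrite /in_U e expr0n /=.
  by rewrite eq_sym oner_eq0.
apply/eqP; rewrite eqn_leq rank_leq_col /=.
have rk : forall f : 'I_3 -> 'I_4, \det (rowsub f (M3 u)) != 0 -> (3 <= \rank (M3 u))%N.
  move=> f hd; rewrite -{1}(@mxrank_unit _ 3 (rowsub f (M3 u))); last by rewrite unitmxE unitfE.
  exact: mxrankS (rowsub_sub f (M3 u)).
have := det1E (nz 0) (nz 1) (nz 2).
have := det2E (nz 0) (nz 1) (nz 2).
have [d1|/rk //] := eqVneq (\det (rowsub f1 (M3 u))) 0.
have [d2|/rk //] := eqVneq (\det (rowsub f2 (M3 u))) 0.
rewrite d1 d2 !mul0r => /esym/eqP E2 /esym/eqP E1.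
have ne : forall i j, i != j -> (u j)^+2 - (u i)^+2 != 0.
  move=> i j hij; rewrite subr_eq0; apply/negP => /eqP/(sq_inj h2)/hinj e.
  by rewrite e eqxx in hij.
have V : (u 1 ^+ 2 - u 0 ^+ 2) * (u 2 ^+ 2 - u 0 ^+ 2) * (u 2 ^+ 2 - u 1 ^+ 2) != 0.
  by rewrite !mulf_neq0 // ne.
rewrite mulf_eq0 (negbTE V) /= in E1.
rewrite mulf_eq0 (negbTE V) /= in E2.
have := key h2 _ _.
move=> /(_ (u 0 ^+ 2) (u 1 ^+ 2) (u 2 ^+ 2)).
move=> K.
have e12 := K (eqP E1) (eqP E2).
move: (ne 1 2 isT); by rewrite e12 subrr eqxx.
Qed.
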